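(* In the standard LLP setup, for every $N\ge1$: $K^\uparrow\neq\emptyset$ if and only if $L(G,\gamma^N_{cons})\subseteq\overline{K^\uparrow}$.
   Context: Standard LLP setup. $\Sigma=\Sigma_c\,\dot\cup\,\Sigma_{uc}$ is a finite alphabet partitioned into controllable and uncontrollable events. The plant $G$ has generated language $L(G)$ and marked language $L_m(G)$ with $L(G)=\overline{L_m(G)}$ ($\overline{M}$ = set of prefixes of strings in $M$). The legal language $K\subseteq L_m(G)$ satisfies $K=\overline{K}\cap L_m(G)$. For a prefix-closed $L$, $M$ is controllable w.r.t. $L$ if $\overline{M}\Sigma_{uc}\cap L\subseteq\overline{M}$; $K^\uparrow$ is the supremal sublanguage of $K$ controllable w.r.t. $L(G)$. For a language $L$ and $s\in\Sigma^*$: $L/s=\{t: st\in L\}$; $L|_N=\{t\in L:|t|\le N\}$; $\Sigma_{L(G)}(s)=\{\sigma\in\Sigma: s\sigma\in L(G)\}$. $M^{\uparrow/s|_N}$ is the supremal sublanguage of $M$ controllable w.r.t. $L(G)/s|_N$. Conservative attitude: $f^N_{cons}(s)=[K/s|_{N-1}]^{\uparrow/s|_N}$; control policy $\gamma^N_{cons}(s)=(\overline{f^N_{cons}(s)}\cap\Sigma)\cup(\Sigma_{uc}\cap\Sigma_{L(G)}(s))$. Closed-loop language $L(G,\gamma)$: $\epsilon\in L(G,\gamma)$, and $s\sigma\in L(G,\gamma)$ iff $s\in L(G,\gamma)$, $s\sigma\in L(G)$, $\sigma\in\gamma(s)$. *)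

(* Defs.v *)
From mathcomp Require Import all_boot.
Set Implicit Arguments. Unset Strict Implicit. Unset Printing Implicit Defensive.

Section LLP.
Variable Sigma : finType.

Definition lang := seq Sigma -> Prop.

Definition pref (M : lang) : lang := fun s => exists t, M (s ++ t).

Definition subl (M K : lang) : Prop := forall s, M s -> K s.

(* ctrl sigma = true  iff  sigma \in Sigma_c ; Sigma_uc is the complement. *)
Variable ctrl : pred Sigma.

Definition controllable (L M : lang) : Prop :=
  forall s sigma, pref M s -> ~~ ctrl sigma -> L (rcons s sigma) ->
    pref M (rcons s sigma).

Definition supC (L K : lang) : lang :=
  fun s => exists M : lang, subl M K /\ controllable L M /\ M s.

Definition quot (L : lang) (s : seq Sigma) : lang := fun t => L (s ++ t).

Definition trunc (L : lang) (N : nat) : lang := fun t => L t /\ size t <= N.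

(* Conservative attitude:
   f^N_cons(s) = [K/s|_{N-1}]^{\uparrow/s|_N}, the supremal sublanguage of
   K/s|_{N-1} controllable w.r.t. L(G)/s|_N. *)
Definition fcons (LG K : lang) (N : nat) (s : seq Sigma) : lang :=
  supC (trunc (quot LG s) N) (trunc (quot K s) N.-1).

(* Control policy
   gamma^N_cons(s) = (\overline{f^N_cons(s)} \cap Sigma) \cup (Sigma_uc \cap Sigma_{L(G)}(s)). *)
Definition gamma_cons (LG K : lang) (N : nat) (s : seq Sigma) (sigma : Sigma) : Prop :=
  pref (fcons LG K N s) [:: sigma] \/ (~~ ctrl sigma /\ LG (rcons s sigma)).

Inductive closed_loop (LG : lang) (gamma : seq Sigma -> Sigma -> Prop) : lang :=
| cl_nil : closed_loop LG gamma [::]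
| cl_rcons : forall s sigma, closed_loop LG gamma s -> LG (rcons s sigma) ->
    gamma s sigma -> closed_loop LG gamma (rcons s sigma).

End LLP.

(* Main.v *)
Require Import Defs.
From mathcomp Require Import all_boot.

Lemma cat_split {T : Type} {x t s w : seq T} : x ++ t = s ++ w ->
  (exists y, s = x ++ y) \/ (exists y, x = s ++ y /\ y ++ t = w).
Proof.
elim: x s => [|a x IH] [|b s] /=.
- by move=> _; left; exists [::].
- by move=> _; left; exists (b :: s).
- by move=> H; right; exists (a :: x).
- case=> -> /IH [[y ->]|[y [-> H]]].
  + by left; exists y.
  + by right; exists y.
Qed.

Lemma pref_cat (Sigma : finType) (M : lang Sigma) x y : pref M (x ++ y) -> pref M x.
Proof. by case=> t H; exists (y ++ t); rewrite catA. Qed.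

Lemma supC_ctrl (Sigma : finType) (ctrl : pred Sigma) (L K : lang Sigma) :
  controllable ctrl L (supC ctrl L K).
Proof.
move=> s u [t [M [hM [cM Mst]]]] nu Lsu.
have [t' Ht'] : pref M (rcons s u) by apply: cM => //; exists t.
by exists t'; exists M.
Qed.

Theorem theorem4 (Sigma : finType) (ctrl : pred Sigma) (LmG LG K : lang Sigma)
  (hLG : forall s, LG s <-> pref LmG s)
  (hK : subl K LmG)
  (hKclosed : forall s, K s <-> pref K s /\ LmG s)
  (N : nat) (hN : 1 <= N) :
  (exists s, supC ctrl LG K s) <->
  subl (closed_loop LG (gamma_cons ctrl LG K N)) (pref (supC ctrl LG K)).
Proof.
split; last first.
  by move=> H; case: (H [::] (cl_nil _ _)) => t Ht; exists t.
case=> s0 Hs0 x; elim=> [|s u _ IH Lsu [Hg|[nu _]]].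
- by exists s0.
- case: Hg => t /= [M [hM [cM Mut]]].
  pose M' : lang Sigma := fun z => supC ctrl LG K z \/ exists w, M w /\ z = s ++ w.
  have subM' : subl M' K.
    move=> z [[M0 [h0 [_ ?]]]|[w [Mw ->]]]; first exact: h0.
    by case: (hM _ Mw).
  have cM' : controllable ctrl LG M'.
    move=> x' v [t' [Hx|[w [Mw E]]]] nv Lxv.
    + have [t2 H2] : pref (supC ctrl LG K) (rcons x' v).
        by apply: supC_ctrl => //; exists t'.
      by exists t2; left.
    + case: (cat_split E) => [[y Ey]|[y [Ey Eyt]]].
      * have px : pref (supC ctrl LG K) x'.
          by apply: (@pref_cat _ _ x' y); rewrite -Ey.
        have [t2 H2] : pref (supC ctrl LG K) (rcons x' v) by apply: supC_ctrl.
        by exists t2; left.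
      * subst x'.
        have [t2 H2] : pref M (rcons y v).
          apply: cM => //; first by exists t'; rewrite Eyt.
          split; first by rewrite /quot -rcons_cat.
          case: (hM _ Mw) => _ Hw.
          rewrite size_rcons; rewrite -Eyt size_cat in Hw.
          apply: (@leq_trans (N.-1).+1); last by rewrite prednK.
          by rewrite ltnS; apply: leq_trans (leq_addr _ _) Hw.
        by exists t2; right; exists (rcons y v ++ t2); rewrite rcons_cat catA.
  exists t; exists M'; split=> //; split=> //.
  by right; exists (u :: t); rewrite cat_rcons.
- by apply: supC_ctrl.
Qed.
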